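(* In the transaction packaging game described in the context, define $\hat p:M\to\mathbb{R}$ by $$\hat p(\mathsf{tx})=\frac{1}{|M|}\left(k+\sum_{\mathsf{tx}'\in M}\frac{\ln v(\mathsf{tx})-\ln v(\mathsf{tx}')}{\lambda}\right).$$ If $0\le\hat p(\mathsf{tx})\le 1$ for all $\mathsf{tx}\in M$, then the corresponding strategy of $\hat p$ (a mixed strategy $\sigma$ with $p^\sigma(\mathsf{tx})=\hat p(\mathsf{tx})$ for all $\mathsf{tx}\in M$) is an equilibrium strategy. Moreover, for all $\mathsf{tx}\in M$, $$v(\mathsf{tx})\exp(-\lambda\hat p(\mathsf{tx}))=\exp\left(-\frac{\lambda k}{|M|}\right)\exp\left(\frac{1}{|M|}\sum_{\mathsf{tx}'\in M}\ln v(\mathsf{tx}')\right).$$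
   Context: Transaction packaging game. Fix a positive integer $k$ (block capacity), a real $\lambda>0$ (network latency parameter), a finite set $M$ (the mempool) of transactions with $|M|\ge k$, and a gas price function $v:M\to(0,\infty)$. Miners are indexed by $i\in[0,1]$. A pure strategy of a miner is a subset $D\subseteq M$ with $|D|=k$; let $\mathcal{S}$ be the set of such subsets. A mixed strategy is a probability distribution $\sigma$ on $\mathcal{S}$, and its marginal probability is $p^\sigma(\mathsf{tx})=\sum_{D\in\mathcal{S}}\sigma(D)\mathbf{1}[\mathsf{tx}\in D]$. A corresponding strategy of a function $p:M\to[0,1]$ is a mixed strategy $\sigma$ with $p^\sigma(\mathsf{tx})=p(\mathsf{tx})$ for all $\mathsf{tx}\in M$. Conditional on miner $i$ mining a block $B_i$ (drawn from her mixed strategy $\sigma_i$), the number $\gamma$ of other blocks mined is distributed as $\mathrm{Poisson}(\lambda)$; they are mined by miners chosen independently and uniformly at random from $[0,1]$, each such miner $j$ producing a block $B_j$ drawn independently from her mixed strategy $\sigma_j$. The utility of miner $i$ is $u_i(\sigma_i,\sigma_{-i})=\sum_{\mathsf{tx}\in M}p^{\sigma_i}(\mathsf{tx})\,v(\mathsf{tx})\,\Pr[\text{no other mined block }B_j\ (j\neq i)\text{ contains }\mathsf{tx}]$. A mixed strategy $\sigma^*$ is an equilibrium strategy if for every $i\in[0,1]$ and every mixed strategy $\sigma$, $u_i(\sigma,\sigma^*_{-i})\le u_i(\sigma^*,\sigma^*_{-i})$, where $\sigma^*_{-i}$ denotes the profile in which all miners other than $i$ use $\sigma^*$. *)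

(* Defs.v *)
From HB Require Import structures.
From mathcomp Require Import all_boot all_order all_algebra.
From mathcomp Require Import all_classical all_reals all_analysis.
Set Implicit Arguments. Unset Strict Implicit. Unset Printing Implicit Defensive.
Import Order.TTheory GRing.Theory Num.Theory.
Import numFieldTopology.Exports numFieldNormedType.Exports.
Local Open Scope ring_scope.

Section Game.
Variables (R : realType) (M : finType) (k : nat) (lam : R) (v : M -> R).

(* A mixed strategy: a probability distribution on the k-element subsets of M,
   encoded as a function on {set M} vanishing outside sets of size k. *)
Definition is_mixed (sigma : {ffun {set M} -> R}) : Prop :=
  (forall D : {set M}, 0 <= sigma D) /\
  (forall D : {set M}, #|D| != k -> sigma D = 0) /\
  \sum_(D : {set M}) sigma D = 1.

Definition marg (sigma : {ffun {set M} -> R}) (tx : M) : R :=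
  \sum_(D : {set M}) sigma D * (tx \in D)%:R.

Definition not_in_block (sigma : {ffun {set M} -> R}) (tx : M) : R :=
  \sum_(D : {set M}) sigma D * (tx \notin D)%:R.

(* Pr[no other mined block contains tx] when all other miners use sigma:
   gamma ~ Poisson(lam) other blocks, each drawn independently from sigma. *)
Definition no_other (sigma : {ffun {set M} -> R}) (tx : M) : R :=
  limn (series (fun n : nat => poisson_pmf lam n * not_in_block sigma tx ^+ n)).

Definition utility (sigma sigmastar : {ffun {set M} -> R}) : R :=
  \sum_(tx : M) marg sigma tx * v tx * no_other sigmastar tx.

(* equilibrium strategy (miners are symmetric, so the quantifier over the
   miner index i in [0,1] is vacuous) *)
Definition is_equilibrium (sigmastar : {ffun {set M} -> R}) : Prop :=
  is_mixed sigmastar /\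
  forall sigma, is_mixed sigma -> utility sigma sigmastar <= utility sigmastar sigmastar.

Definition corresponds (p : M -> R) (sigma : {ffun {set M} -> R}) : Prop :=
  is_mixed sigma /\ forall tx, marg sigma tx = p tx.

Definition phat (tx : M) : R :=
  #|M|%:R^-1 * (k%:R + \sum_(tx' : M) (ln (v tx) - ln (v tx')) / lam).

End Game.

(* Main.v *)
Require Import Defs.
From HB Require Import structures.
From mathcomp Require Import all_boot all_order all_algebra.
From mathcomp Require Import all_classical all_reals all_analysis.
From mathcomp Require Import ring lra.
Import Order.TTheory GRing.Theory Num.Theory.
Import numFieldTopology.Exports numFieldNormedType.Exports.
Local Open Scope ring_scope.

Section H.
Variables (R : realType) (M : finType) (k : nat).

Lemma sum_ind1 (i : M) : \sum_(x : M) ((x == i)%:R : R) = 1.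
Proof.
rewrite (bigD1 i) //= eqxx big1 ?addr0 // => x /negbTE -> //.
Qed.

Lemma sum_indD (D : {set M}) : \sum_(x : M) ((x \in D)%:R : R) = #|D|%:R.
Proof.
rewrite -sum1_card natr_sum [RHS]big_mkcond /=.
by apply: eq_bigr => x _; case: (x \in D).
Qed.

Lemma not_in_blockE (sigma : {ffun {set M} -> R}) tx :
  is_mixed k sigma -> not_in_block sigma tx = 1 - marg sigma tx.
Proof.
move=> [_ [_ H1]]; rewrite /not_in_block /marg -[X in _ = X - _]H1 -sumrB.
by apply: eq_bigr => D _; case: (tx \in D); rewrite /= ?mulr1 ?mulr0 ?subr0 ?subrr.
Qed.

Lemma sum_marg (sigma : {ffun {set M} -> R}) :
  is_mixed k sigma -> \sum_tx marg sigma tx = k%:R.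
Proof.
move=> [H0 [Hk H1]]; rewrite /marg exchange_big /=.
transitivity (\sum_(D : {set M}) sigma D * k%:R); last by rewrite -mulr_suml H1 mul1r.
apply: eq_bigr => D _; rewrite -mulr_sumr sum_indD.
have [/eqP ->|/Hk ->] := boolP (#|D| == k) => //.
by rewrite !mul0r.
Qed.

Lemma mix_mixed (s1 s2 : {ffun {set M} -> R}) a b :
  is_mixed k s1 -> is_mixed k s2 -> 0 <= a -> 0 <= b -> a + b = 1 ->
  is_mixed k [ffun D => a * s1 D + b * s2 D] /\
  forall tx, marg [ffun D => a * s1 D + b * s2 D] tx = a * marg s1 tx + b * marg s2 tx.
Proof.
move=> [A0 [Ak A1]] [B0 [Bk B1]] a0 b0 ab; split; last first.
  move=> tx; rewrite /marg !mulr_sumr -big_split /=; apply: eq_bigr => D _.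
  by rewrite ffunE; ring.
split; first by move=> D; rewrite ffunE addr_ge0 // mulr_ge0.
split; first by move=> D HD; rewrite ffunE Ak // Bk // !mulr0 addr0.
by under eq_bigr do rewrite ffunE; rewrite big_split /= -!mulr_sumr A1 B1 !mulr1.
Qed.

Lemma integral_mixed (p : M -> R) :
  (forall x, p x = 0 \/ p x = 1) -> \sum_x p x = k%:R ->
  exists sigma, is_mixed k sigma /\ forall tx, marg sigma tx = p tx.
Proof.
move=> H01 Hs.
set D := [set x | p x == 1].
have pE : forall x, p x = (x \in D)%:R.
  move=> x; rewrite inE; case: (H01 x) => ->; rewrite ?eqxx //.
  by rewrite eq_sym oner_eq0.
have cD : #|D| = k.
  apply/eqP; rewrite -(eqr_nat R) -sum_indD -Hs; apply/eqP.
  by apply: eq_bigr => x _; rewrite pE.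
exists [ffun E => ((E == D)%:R : R)]; split; last first.
  move=> tx; rewrite /marg (bigD1 D) //= ffunE eqxx mul1r big1 ?addr0 ?pE //.
  by move=> E /negbTE HE; rewrite ffunE HE mul0r.
split; first by move=> E; rewrite ffunE ler0n.
split; first by move=> E HE; rewrite ffunE; case: eqP => // HED; rewrite HED cD eqxx in HE.
by rewrite (bigD1 D) //= ffunE eqxx big1 ?addr0 // => E /negbTE HE; rewrite ffunE HE.
Qed.


Definition frac (p : M -> R) := [set x | (0 < p x) && (p x < 1)].

Lemma one_frac (p : M -> R) i :
  (forall x, x != i -> p x = 0 \/ p x = 1) -> 0 < p i < 1 ->
  \sum_x p x = k%:R -> False.
Proof.
move=> H01 /andP[pi0 pi1] Hs.
have E : \sum_(x | x != i) p x = (\sum_(x | x != i) ((p x == 1%R) : nat))%:R.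
  rewrite natr_sum; apply: eq_bigr => x /H01 [] ->; rewrite ?eqxx //.
  by rewrite eq_sym oner_eq0.
move: Hs; rewrite (bigD1 i) //= E.
set m := (\sum_(x | x != i) _)%N => Hs.
have : p i = k%:R - m%:R by rewrite -Hs; ring.
have [km|mk] := leqP k m.
  move=> Hpi; have : (k%:R : R) <= m%:R by rewrite ler_nat.
  lra.
move=> Hpi; have : (m.+1%:R : R) <= k%:R by rewrite ler_nat.
rewrite -natr1; lra.
Qed.

Lemma exists_mixed_aux n (p : M -> R) :
  (#|frac p| <= n)%N -> (forall x, 0 <= p x <= 1) -> \sum_x p x = k%:R ->
  exists sigma, is_mixed k sigma /\ forall tx, marg sigma tx = p tx.
Proof.
elim: n p => [|n IH] p Hn H01 Hs.
  apply: integral_mixed Hs => x; move: Hn; rewrite leqn0 cards_eq0 => /eqP F.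
  have : x \notin frac p by rewrite F inE.
  rewrite inE negb_and -!leNgt; case/andP: (H01 x) => a b /orP[] c.
    by left; apply/le_anti; rewrite c a.
  by right; apply/le_anti; rewrite c b.
have [F|[i Hi]] := set_0Vmem (frac p).
  apply: integral_mixed Hs => x.
  have : x \notin frac p by rewrite F inE.
  rewrite inE negb_and -!leNgt; case/andP: (H01 x) => a b /orP[] c.
    by left; apply/le_anti; rewrite c a.
  by right; apply/le_anti; rewrite c b.
have [F|[j Hj]] := set_0Vmem (frac p :\ i).
  exfalso; apply: (@one_frac p i) Hs; last by move: Hi; rewrite inE.
  move=> x xi; have : x \notin frac p :\ i by rewrite F inE.
  rewrite !inE xi /= negb_and -!leNgt; case/andP: (H01 x) => a b /orP[] c.
    by left; apply/le_anti; rewrite c a.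
  by right; apply/le_anti; rewrite c b.
move: Hj; rewrite !inE => /andP[ji /andP[pj0 pj1]].
move: Hi; rewrite !inE => /andP[pi0 pi1].
have step : forall i j, j != i -> 0 < p i -> p i < 1 -> 0 < p j -> p j < 1 ->
   forall c, 0 < c -> (c <= 1 - p i /\ c <= p j) -> (c = 1 - p i \/ c = p j) ->
    exists sigma, is_mixed k sigma /\ forall tx, marg sigma tx = p tx + c * ((tx == i)%:R - (tx == j)%:R).
  clear -IH Hn H01 Hs => i j ji pi0 pi1 pj0 pj1.
pose d x : R := (x == i)%:R - (x == j)%:R.
have sd : \sum_x d x = 0 by rewrite sumrB !sum_ind1 subrr.
have di : d i = 1 by rewrite /d eqxx eq_sym (negbTE ji) subr0.
have dj : d j = -1 by rewrite /d eqxx (negbTE ji) sub0r.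
have dx : forall x, x != i -> x != j -> d x = 0.
  by move=> x /negbTE xi /negbTE xj; rewrite /d xi xj subrr.
  move=> c c0 [c1 c2] ceq; apply: (IH (fun x => p x + c * d x)).  
  - have sub : frac (fun x => p x + c * d x) \subset frac p :\ (if c == 1 - p i then i else j).
      apply/fintype.subsetP => x; rewrite !inE.
      have [->|xi] := eqVneq x i.
        rewrite di mulr1 => /andP[_ h]; case: ifP => [/eqP|/negbT] e.
          by rewrite e in h; lra.
        by apply/and3P; split; [rewrite eq_sym | exact: pi0 | exact: pi1].
      have [->|xj] := eqVneq x j.
        rewrite dj mulrN1 => /andP[h _]; case: ifP => [/eqP|/negbT] e.
          by apply/and3P; split; [idtac | exact: pj0 | exact: pj1].
        case: ceq => ce; first by rewrite ce eqxx in e.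
        by rewrite ce in h; lra.
      rewrite dx // mulr0 addr0 => ->; case: ifP => _; by rewrite ?xi ?xj.
    apply: leq_trans (subset_leq_card sub) _.
    have : (if c == 1 - p i then i else j) \in frac p by case: ifP; rewrite inE ?pi0 ?pi1 ?pj0 ?pj1.
    move=> win; move: Hn; rewrite (cardsD1 (if c == 1 - p i then i else j) (frac p)) win add1n ltnS //.
  - move=> x; have [->|xi] := eqVneq x i; first by rewrite di; apply/andP; split; lra.
    have [->|xj] := eqVneq x j; first by rewrite dj; apply/andP; split; lra.
    by rewrite dx // mulr0 addr0.
  - by rewrite big_split /= -mulr_sumr sd mulr0 addr0.
have [s [s0 sb se]] : exists s : R, [/\ 0 < s, s <= 1 - p i /\ s <= p j & s = 1 - p i \/ s = p j].
  have [h|h] := leP (1 - p i) (p j); [exists (1 - p i) | exists (p j)];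
    (split; [lra | split; lra | by [left|right]]).
have [t [t0 tb te]] : exists t : R, [/\ 0 < t, t <= 1 - p j /\ t <= p i & t = 1 - p j \/ t = p i].
  have [h|h] := leP (1 - p j) (p i); [exists (1 - p j) | exists (p i)];
    (split; [lra | split; lra | by [left|right]]).
have ij : i != j by rewrite eq_sym.
have [s1 [Hs1 Hm1]] := step i j ji pi0 pi1 pj0 pj1 s s0 sb se.
have [s2 [Hs2 Hm2]] := step j i ij pj0 pj1 pi0 pi1 t t0 tb te.
have st : s + t != 0 by rewrite gt_eqF // addr_gt0.
have a0 : 0 <= t / (s + t) by rewrite divr_ge0 // ltW // addr_gt0.
have b0 : 0 <= s / (s + t) by rewrite divr_ge0 // ltW // addr_gt0.
have ab : t / (s + t) + s / (s + t) = 1 by rewrite -mulrDl addrC divff.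
have [Hmix Hmarg] := @mix_mixed s1 s2 _ _ Hs1 Hs2 a0 b0 ab.
exists [ffun D => t / (s + t) * s1 D + s / (s + t) * s2 D]; split => // tx.
rewrite Hmarg Hm1 Hm2; field; exact: st.
Qed.

End H.
Local Open Scope classical_set_scope.
Local Open Scope ring_scope.
Lemma poisson_gf (R : realType) (lam q : R) : 0 < lam ->
  limn (series (fun n : nat => poisson_pmf lam n * q ^+ n)) = expR (- (lam * (1 - q))).
Proof.
move=> lam0.
have h : series (exp_coeff (lam * q)) @ \oo --> expR (lam * q) :=
  is_cvg_series_exp_coeff (lam * q).
have h2 : (series (exp_coeff (lam * q)) \* (fun=> expR (- lam))) @ \oo -->
   expR (lam * q) * expR (- lam).
  by apply: cvgM => //; exact: cvg_cst.
have -> : series (fun n : nat => poisson_pmf lam n * q ^+ n) =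
   (series (exp_coeff (lam * q)) \* (fun _ => expR (- lam))).
  apply/funext => n; rewrite /series /= mulr_suml; apply: eq_bigr => i _.
  rewrite /poisson_pmf lam0 /exp_coeff /= exprMn; ring.
rewrite (cvg_lim _ h2) // -expRD; congr expR; ring.
Qed.

Theorem lemma3p3 (R : realType) (M : finType) (k : nat) (lam : R) (v : M -> R) :
  (0 < k)%N -> (k <= #|M|)%N -> 0 < lam -> (forall tx, 0 < v tx) ->
  (forall tx, 0 <= phat k lam v tx <= 1) ->
  ((exists sigma, corresponds k (phat k lam v) sigma) /\
   (forall sigma, corresponds k (phat k lam v) sigma -> is_equilibrium k lam v sigma)) /\
  (forall tx, v tx * expR (- (lam * phat k lam v tx)) =
     expR (- (lam * k%:R / #|M|%:R)) *
     expR (#|M|%:R^-1 * \sum_(tx' : M) ln (v tx'))).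
Proof.
move=> k0 kM lam0 v0 Hp.
have n0 : (0 < #|M|)%N by apply: leq_trans kM.
have nR : (#|M|%:R : R) != 0 by rewrite pnatr_eq0 -lt0n.
have lamR : lam != 0 by rewrite gt_eqF.
set S := \sum_(tx' : M) ln (v tx').
have lp : forall tx, lam * phat k lam v tx = lam * k%:R / #|M|%:R + (ln (v tx) - #|M|%:R^-1 * S).
  move=> tx; rewrite /phat -mulr_suml sumrB sumr_const -/S.
  rewrite (_ : ln (v tx) *+ #|xpredT| = ln (v tx) * #|M|%:R); last by rewrite mulr_natr.
  by field; apply/andP.
set C := expR (- (lam * k%:R / #|M|%:R)) * expR (#|M|%:R^-1 * S).
have part3 : forall tx, v tx * expR (- (lam * phat k lam v tx)) = C.
  move=> tx.
  have -> : expR (- (lam * phat k lam v tx)) = C * expR (- ln (v tx)).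
    by rewrite /C lp -!expRD; congr expR; ring.
  rewrite expRN lnK ?posrE //; field; exact: lt0r_neq0 (v0 tx).
split; last exact: part3.
have sump : \sum_tx phat k lam v tx = k%:R.
  apply: (mulfI lamR); rewrite mulr_sumr.
  under eq_bigr do rewrite lp.
  rewrite big_split sumrB /= !sumr_const -/S.
  move: nR; set N := (#|M|%:R : R) => nR.
  have cM : forall x : R, x *+ #|M| = x * N by move=> x; rewrite mulr_natr.
  rewrite !cM; field; exact: nR.
split.
  have [sigma [H1 H2]] := @exists_mixed_aux R M k _ (phat k lam v) (leqnn _) Hp sump.
  by exists sigma.
move=> sigma [Hs Hm].
have key : forall tx, v tx * no_other lam sigma tx = C.
  move=> tx; rewrite /no_other poisson_gf // (@not_in_blockE R M k) // Hm.
  have -> : 1 - (1 - phat k lam v tx) = phat k lam v tx by ring.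
  exact: part3.
have U : forall s, is_mixed k s -> utility lam v s sigma = k%:R * C.
  move=> s Hs'; rewrite /utility.
  under eq_bigr do rewrite -mulrA key.
  by rewrite -mulr_suml (@sum_marg R M k).
split => // s Hs'; by rewrite !U.
Qed.
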